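(* Let $n\ge1$ and $s\ge 0$, and assume either $n$ is even and $s\le n$, or $n$ is odd and $s\le n-1$. Let $e$ be the greatest even integer with $e\le s$. Then $$\max\{\operatorname{per}(I-A): A\in\tilde\omega_n^s\}=2^{e/2}\Big[1+\Big(\frac{s-e}{2}\Big)^2\Big].$$ Moreover the maximum is attained by the doubly substochastic matrix $M_2\oplus\cdots\oplus M_2\oplus S_2\oplus\mathbf 0_{n-e-2}$ (with $e/2$ copies of $M_2$; when $s=e$ the factors $S_2$ and zero block may be replaced by $\mathbf 0_{n-e}$), where $M_2=\begin{pmatrix}0&1\\1&0\end{pmatrix}$ and $S_2=\begin{pmatrix}0&\frac{s-e}{2}\\\frac{s-e}{2}&0\end{pmatrix}$.
   Context: An $n\times n$ matrix is row substochastic if all entries are nonnegative and each row sum is at most $1$; doubly substochastic if additionally each column sum is at most $1$. $\sigma(A)$ is the sum of all entries of $A$, and $\tilde\omega_n^s$ is the set of $n\times n$ row substochastic matrices $A$ with $\sigma(A)=s$. $\oplus$ is block-diagonal direct sum, $\mathbf 0_m$ the $m\times m$ zero matrix. The permanent is $\operatorname{per}(M)=\sum_{\pi\in S_n}\prod_i m_{i\pi(i)}$, and $I$ is the identity matrix. *)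

(* Defs.v *)
From HB Require Import structures.
From mathcomp Require Import all_boot all_order all_fingroup all_algebra.
Set Implicit Arguments. Unset Strict Implicit. Unset Printing Implicit Defensive.
Import Order.TTheory GRing.Theory Num.Theory.
Local Open Scope ring_scope.

Definition per (R : comNzRingType) (n : nat) (M : 'M[R]_n) : R :=
  \sum_(p : 'S_n) \prod_(i < n) M i (p i).

Definition sigma (R : comNzRingType) (n : nat) (A : 'M[R]_n) : R :=
  \sum_(i < n) \sum_(j < n) A i j.

Definition row_substochastic (R : numDomainType) (n : nat) (A : 'M[R]_n) : Prop :=
  (forall i j, 0 <= A i j) /\ (forall i, \sum_(j < n) A i j <= 1).

Definition doubly_substochastic (R : numDomainType) (n : nat) (A : 'M[R]_n) : Prop :=
  row_substochastic A /\ (forall j, \sum_(i < n) A i j <= 1).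

Definition omega_tilde (R : numDomainType) (n : nat) (s : R) (A : 'M[R]_n) : Prop :=
  row_substochastic A /\ sigma A = s.

(* The n x n matrix  M_2 (+) ... (+) M_2 (+) S_2 (+) 0_{n-e-2}  (e/2 copies of M_2),
   written entrywise: indices are grouped in consecutive pairs {2k, 2k+1};
   pairs with 2k < e carry the block M_2 = [[0,1],[1,0]], the pair {e, e+1}
   carries S_2 = [[0,c],[c,0]] with c = (s-e)/2, and all other entries are 0. *)
Definition extremal_matrix (R : numFieldType) (n e : nat) (s : R) : 'M[R]_n :=
  \matrix_(i < n, j < n)
    if ((i : nat)./2 == (j : nat)./2)%N && (i != j :> nat) then
      (if ((i : nat) < e)%N then 1
       else if ((i : nat)./2 == e./2)%N then (s - e%:R) / 2%:R else 0)
    else 0.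

(* Main.v *)
Require Import Defs.
From HB Require Import structures.
From mathcomp Require Import all_boot all_order all_fingroup all_algebra.
From mathcomp Require Import zify ring lra.
Set Implicit Arguments. Unset Strict Implicit. Unset Printing Implicit Defensive.
Import Order.TTheory GRing.Theory Num.Theory.
Local Open Scope ring_scope.

Section Perm.
Variable R : realFieldType.
Variable n : nat.
Implicit Types (t : 'I_n -> 'I_n) (r : 'I_n -> R) (s : 'S_n).

Definition fac t r (x y : 'I_n) : R := (x == y)%:R - r x * (y == t x)%:R.
Definition wt t r s : R := \prod_(x : 'I_n) fac t r x (s x).
Definition FF t r : R := \sum_(s : 'S_n) wt t r s.
Definition rz (C : {set 'I_n}) r := fun x => if x \in C then 0 else r x.

Lemma FF_ext t r1 r2 : r1 =1 r2 -> FF t r1 = FF t r2.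
Proof. by move=> h; apply: eq_bigr => s _; apply: eq_bigr => x _; rewrite /fac h. Qed.

Lemma wt_valid t r s x : wt t r s != 0 -> s x = x \/ s x = t x.
Proof.
move=> /prodf_neq0 /(_ x isT); rewrite /fac.
case: (eqVneq x (s x)) => [<-|_]; first by left.
case: (eqVneq (s x) (t x)) => [->|_]; first by right.
by rewrite mulr0 subr0 eqxx.
Qed.

Lemma FF0 t r : (forall x, r x = 0) -> FF t r = 1.
Proof.
move=> h; rewrite /FF (bigD1 1%g) //= big1 ?addr0.
  by apply: big1 => x _; rewrite /fac h mul0r subr0 perm1 eqxx.
move=> s hs.
have : ~~ [forall x, s x == x].
  apply: contra hs => /forallP h1; apply/eqP/permP => x; rewrite perm1; exact/eqP.
case/forallPn => x hx.
by rewrite /wt (bigD1 x) //= /fac h mul0r subr0 eq_sym (negbTE hx) mul0r.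
Qed.

Lemma caseA t r i : t i = i -> FF t r = (1 - r i) * FF t (rz [set i] r).
Proof.
move=> ti; rewrite /FF big_distrr; apply: eq_bigr => s _.
rewrite /wt (bigD1 i) //= [in RHS](bigD1 i) //= mulrA; congr (_ * _).
  rewrite /fac /rz inE eqxx mul0r subr0 ti.
  by rewrite [s i == i]eq_sym; case: eqP => _ /=; ring.
apply: eq_bigr => x hx; by rewrite /fac /rz inE (negbTE hx).
Qed.

Lemma caseB t r i : t i != i -> (forall k, t k = i -> r k = 0) ->
  FF t r = FF t (rz [set i] r).
Proof.
move=> ti hk; apply: eq_bigr => s _.
case: (eqVneq (s i) i) => si.
  apply: eq_bigr => x _; rewrite /fac /rz inE.
  case: (eqVneq x i) => [->|//]; rewrite si eqxx mul0r.
  by rewrite eq_sym (negbTE ti) mulr0.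
have -> : wt t (rz [set i] r) s = 0.
  by rewrite /wt (bigD1 i) //= /fac /rz inE eqxx mul0r subr0 eq_sym (negbTE si) mul0r.
set k := (s^-1)%g i.
have sk : s k = i by rewrite /k permKV.
have ki : k != i by apply: contraNneq si => e; rewrite -{1}e sk.
rewrite /wt (bigD1 k) //= /fac sk (negbTE ki).
case: (eqVneq i (t k)) => [e|ne]; first by rewrite hk // mul0r subr0 mul0r.
by rewrite mulr0 subr0 mul0r.
Qed.

Section Cycle.
Variables (t : 'I_n -> 'I_n) (r : 'I_n -> R) (p : {perm 'I_n}) (i : 'I_n).
Hypothesis hC : forall y, fconnect p i y -> t y = p y /\ p y != y.
Let C := [set y | fconnect p i y].

Lemma C_p y : (p y \in C) = (y \in C).
Proof. by rewrite !inE -same_fconnect1_r //; exact: perm_inj. Qed.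

Lemma iC : i \in C.
Proof. by rewrite inE connect0. Qed.

Lemma f_inj : injective (fun x => if x \in C then p x else x).
Proof.
move=> x y /=; case: ifP => hx; case: ifP => hy.
- exact: perm_inj.
- by move=> e; rewrite -C_p e hy in hx.
- by move=> e; rewrite -C_p -e hx in hy.
- by [].
Qed.

Let rho := perm f_inj.
Lemma rhoE y : rho y = if y \in C then p y else y.
Proof. by rewrite permE. Qed.

Lemma hCC y : y \in C -> t y = p y /\ p y != y.
Proof. by rewrite inE => /hC. Qed.

Lemma moved_step s x : wt t r s != 0 -> x \in C -> s x != x -> s (p x) != p x.
Proof.
move=> hw hx hsx; have [e1 e2] := hCC hx.
have sx : s x = p x by case: (wt_valid x hw) => [e|->//]; rewrite e eqxx in hsx.
apply/eqP => h; have : s (p x) = s x by rewrite h sx.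
by move/perm_inj => h2; rewrite h2 eqxx in e2.
Qed.

Lemma moved_iter s x k : wt t r s != 0 -> x \in C -> s x != x ->
  s (iter k p x) != iter k p x /\ iter k p x \in C.
Proof.
move=> hw hx hsx; elim: k => [|k [IH1 IH2]] //=; split.
  exact: moved_step.
by rewrite C_p.
Qed.

Lemma cyc_fix s : wt t r s != 0 -> s i = i -> forall y, y \in C -> s y = y.
Proof.
move=> hw si y hy; apply/eqP; apply: contraT => hsy.
have : fconnect p y i by rewrite fconnect_sym; [by rewrite inE in hy | exact: perm_inj].
move/iter_findex => e.
have := moved_iter (findex p y i) hw hy hsy; rewrite e si eqxx; by case.
Qed.

Lemma cyc_move s : wt t r s != 0 -> s i != i -> forall y, y \in C -> s y = p y.
Proof.
move=> hw si y hy.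
have := hy; rewrite inE => /iter_findex e.
have [h1 _] := moved_iter (findex p i y) hw iC si; rewrite e in h1.
have [e1 _] := hCC hy.
by case: (wt_valid y hw) => [h|->//]; rewrite h eqxx in h1.
Qed.

Lemma fixC_eq s : (forall y, y \in C -> s y = y) -> wt t (rz C r) s = wt t r s.
Proof.
move=> h; apply: eq_bigr => x _; rewrite /fac /rz.
case: ifP => hx //; rewrite h // eqxx mul0r.
have [e1 e2] := hCC hx; by rewrite e1 eq_sym (negbTE e2) mulr0.
Qed.

Lemma notfix0 s y : y \in C -> s y != y -> wt t (rz C r) s = 0.
Proof.
move=> hy hsy; apply/eqP/prodf_eq0; exists y => //.
by rewrite /fac /rz hy mul0r subr0 [y == _]eq_sym (negbTE hsy).
Qed.

Lemma cycle_FF :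
  FF t r = FF t (rz C r) * (1 + (-1) ^+ #|C| * \prod_(x in C) r x).
Proof.
rewrite mulrDr mulr1 /FF (bigID (fun s : 'S_n => s i == i)) /=; congr (_ + _).
  rewrite [RHS](bigID (fun s : 'S_n => s i == i)) /= [X in _ = _ + X]big1 ?addr0;
    last by move=> s hs; apply: (notfix0 iC hs).
  apply: eq_bigr => s /eqP si.
  case: (eqVneq (wt t r s) 0) => hw.
    case/boolP: [forall y in C, s y == y] => hf.
      by rewrite fixC_eq // => y hy; apply/eqP; move/forall_inP: hf; apply.
    case/forall_inPn: hf => y hy hsy; by rewrite hw (notfix0 hy hsy).
  by rewrite fixC_eq //; apply: cyc_fix.
rewrite mulrC big_distrr /= (reindex_inj (@mulIg _ rho)) /= big_mkcond /=.
apply: eq_bigr => s _.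
case/boolP: [forall y in C, s y == y] => hf.
  have hf' : forall y, y \in C -> s y = y by move=> y hy; apply/eqP; move/forall_inP: hf; apply.
  rewrite permM hf' ?iC // rhoE iC.
  have [_ ->] := hCC iC.
  rewrite /wt (bigID (mem C)) /= [X in _ = _ * X](bigID (mem C)) /=.
  rewrite [X in _ = _ * (X * _)]big1; last first.
    by move=> x hx; rewrite /fac /rz hx hf' // eqxx mul0r subr0.
  rewrite mul1r; congr (_ * _).
    rewrite -prodrN; apply: eq_bigr => x hx.
    have [e1 e2] := hCC hx.
    by rewrite permM hf' // rhoE hx /fac e1 eqxx mulr1 eq_sym (negbTE e2) sub0r.
  apply: eq_bigr => x hx; rewrite permM rhoE.
  have -> : (s x \in C) = false.
    apply/negbTE; apply: contra hx => hsx.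
    have : s (s x) = s x by apply: hf'.
    by move/perm_inj => <-.
  by rewrite /fac /rz (negbTE hx).
case/forall_inPn: hf => y hy hsy.
rewrite (notfix0 hy hsy) mulr0.
case: ifP => // hi; apply/eqP; apply: contraT => hw.
have ry : rho y = p y by rewrite rhoE hy.
have := cyc_move hw hi hy; rewrite permM -ry => /perm_inj e.
by rewrite e eqxx in hsy.
Qed.

End Cycle.
End Perm.

Section Ineq.
Variable R : realFieldType.

Definition clip (x : R) := Num.max 0 x.
Lemma clipP x : (0 <= x /\ clip x = x) \/ (x < 0 /\ clip x = 0).
Proof.
rewrite /clip; case: (lerP 0 x) => h.
  by left; split => //; rewrite max_r.
by right; split => //; rewrite max_l // ltW.
Qed.

Definition V (m : nat) (S : R) := 2 ^+ m * (1 + (clip (S - 2 * m%:R) / 2) ^+ 2).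

Lemma V_mono m S1 S2 : S1 <= S2 -> V m S1 <= V m S2.
Proof.
move=> h; rewrite /V; apply: ler_wpM2l; first exact: exprn_ge0.
rewrite lerD2l !expr2.
case: (clipP (S1 - 2 * m%:R)) => [[? ->]|[? ->]];
case: (clipP (S2 - 2 * m%:R)) => [[? ->]|[? ->]]; nra.
Qed.

Lemma poly1 (a b P : R) : 0 <= a -> 0 <= b -> a + b <= 2 -> 0 <= P -> P <= (b/2)^+2 ->
  (1 + (a/2)^+2) * (1 + P) <= 1 + ((a+b)/2)^+2.
Proof.
move=> ha hb hab hP hPb.
have hab1 : a * b <= 1.
  have h1 : 0 <= (2 - (a + b)) * (2 + (a + b)) by apply: mulr_ge0; lra.
  have h2 := sqr_ge0 (a - b); rewrite expr2 in h2.
  nra.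
have : (1 + (a/2)^+2) * (1 + P) <= (1 + (a/2)^+2) * (1 + (b/2)^+2).
  by apply: ler_wpM2l; [rewrite expr2; nra | lra].
move=> h; apply: (le_trans h).
have h3 : 0 <= (a * b) * (1 - a * b) by apply: mulr_ge0; [apply: mulr_ge0 | lra].
rewrite !expr2; nra.
Qed.

Lemma poly2 (b tt d : R) : 0 <= b -> b <= 2 -> 0 <= tt -> tt <= 2 -> 0 <= d ->
  b + tt - 2 <= d -> (1 + (b/2)^+2) * (1 + (tt/2)^+2) <= 2 * (1 + (d/2)^+2).
Proof.
move=> hb0 hb2 ht0 ht2 hd0 hd6.
case: (lerP (b + tt) 2) => hs.
  have := poly1 hb0 ht0 hs (exprn_ge0 2 (_ : 0 <= tt/2)) (lexx _).
  move=> /(_ ltac:(lra)) h.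
  apply: (le_trans h).
  have h1 : 0 <= (2 - (b + tt)) * (2 + (b + tt)) by apply: mulr_ge0; lra.
  have : 0 <= (d/2)^+2 by apply: exprn_ge0; lra.
  rewrite !expr2; nra.
have hd : (b + tt - 2)^+2 <= d ^+2 by rewrite !expr2; nra.
set p := 1 - b/2; set q := 1 - tt/2.
have hp : 0 <= p by rewrite /p; lra.
have hq : 0 <= q by rewrite /q; lra.
have hpq : p + q <= 1 by rewrite /p /q; lra.
have hpq2 : p * q <= p by nra.
have key : 0 <= p * q * (2 * (p + q) - p * q) by apply: mulr_ge0; nra.
have eb : b = 2 - 2 * p by rewrite /p; lra.
have et : tt = 2 - 2 * q by rewrite /q; lra.
move: hd key; rewrite eb et !expr2 => hd key; nra.
Qed.

Lemma clip_ge0 x : 0 <= clip x.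
Proof. by case: (clipP x) => [[? ->]|[? ->]]. Qed.
Lemma clip_id x : 0 <= x -> clip x = x.
Proof. by case: (clipP x) => [[? ->]|[? ->]] //; lra. Qed.
Lemma clip_le x y : x <= y -> clip x <= clip y.
Proof. by case: (clipP x) => [[? ->]|[? ->]]; case: (clipP y) => [[? ->]|[? ->]]; lra. Qed.

Lemma combine (X S' tt P : R) : 0 <= X -> 0 <= S' -> 0 <= tt -> 0 <= P -> P <= 1 ->
  P <= (tt/2)^+2 ->
  (forall m, S' <= 2 * m%:R + 2 -> X <= V m S') ->
  forall m, S' + tt <= 2 * m%:R + 2 -> X * (1 + P) <= V m (S' + tt).
Proof.
move=> hX hS ht hP hP1 hPt hV m hm.
case: (lerP 2 tt) => h2.
  have X1P : X * (1 + P) <= X * 2 by apply: ler_wpM2l; lra.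
  apply: (le_trans X1P).
  case: m hm => [|m] hm.
    rewrite mulr0 add0r in hm.
    have := hV 0%N; rewrite /V !mulr0 !subr0 expr0 !mul1r => /(_ ltac:(lra)).
    have -> : S' = 0 by lra.
    rewrite (clip_id (lexx 0)) mul0r expr2 mulr0 addr0 => hX1.
    rewrite add0r clip_id //.
    have : 1 <= (tt / 2) ^+ 2 by rewrite expr2; nra.
    lra.
  have em : (m.+1)%:R = m%:R + 1 :> R by rewrite -addn1 natrD.
  rewrite em in hm; rewrite /V em.
  have := hV m ltac:(lra); rewrite /V => hXm.
  have hK : 0 <= 2 ^+ m :> R by apply: exprn_ge0.
  rewrite exprSr mulrAC.
  have hc : clip (S' - 2 * m%:R) <= clip (S' + tt - 2 * (m%:R + 1)).
    by apply: clip_le; lra.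
  have hc0 := clip_ge0 (S' - 2 * m%:R).
  have : (1 + (clip (S' - 2 * m%:R) / 2) ^+ 2) <= (1 + (clip (S' + tt - 2 * (m%:R + 1)) / 2) ^+ 2).
    by rewrite !expr2; nra.
  move=> hcc; have := ler_wpM2l hK hcc; lra.
have hPt2 : P <= (tt/2)^+2 by [].
case: (lerP (2 * m%:R) S') => hs.
  have := hV m ltac:(lra); rewrite /V clip_id; last lra.
  move=> hXm; rewrite clip_id; last lra.
  have hK : 0 <= 2 ^+ m :> R by apply: exprn_ge0.
  have ha : 0 <= S' - 2 * m%:R by lra.
  have hab : S' - 2 * m%:R + tt <= 2 by lra.
  have hp := poly1 ha ht hab hP hPt2.
  have hp' : (1 + ((S' - 2 * m%:R) / 2) ^+ 2) * (1 + P) <= 1 + ((S' + tt - 2 * m%:R) / 2) ^+ 2.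
    by have -> : S' + tt - 2 * m%:R = S' - 2 * m%:R + tt by ring.
  have := ler_wpM2l hK hp'.
  have : X * (1 + P) <= 2 ^+ m * (1 + ((S' - 2 * m%:R) / 2) ^+ 2) * (1 + P).
    by apply: ler_wpM2r => //; lra.
  lra.
case: m hm hs => [|m] hm hs; first by rewrite mulr0 in hs; lra.
have em : (m.+1)%:R = m%:R + 1 :> R by rewrite -addn1 natrD.
rewrite em in hm hs; rewrite /V em.
have := hV m ltac:(lra); rewrite /V => hXm.
have hK : 0 <= 2 ^+ m :> R by apply: exprn_ge0.
set b := clip (S' - 2 * m%:R).
set d := clip (S' + tt - 2 * (m%:R + 1)).
have hb0 : 0 <= b by apply: clip_ge0.
have hb2 : b <= 2.
  rewrite /b; case: (clipP (S' - 2 * m%:R)) => [[? ->]|[? ->]]; lra.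
have hd0 : 0 <= d by apply: clip_ge0.
have hbd : b + tt - 2 <= d.
  rewrite /b /d; case: (clipP (S' - 2 * m%:R)) => [[? ->]|[? ->]];
  case: (clipP (S' + tt - 2 * (m%:R + 1))) => [[? ->]|[? ->]]; lra.
have hp := poly2 hb0 hb2 ht (ltW h2) hd0 hbd.
have h1 : X * (1 + P) <= X * (1 + (tt/2)^+2) by apply: ler_wpM2l; lra.
have h3 : X * (1 + (tt/2)^+2) <= 2 ^+ m * (1 + (b/2)^+2) * (1 + (tt/2)^+2).
  by apply: ler_wpM2r => //; rewrite expr2; nra.
have h4 := ler_wpM2l hK hp.
rewrite exprSr; nra.
Qed.
End Ineq.

Lemma clip0 (R : realFieldType) (x : R) : x <= 0 -> clip x = 0.
Proof. by case: (clipP x) => [[? ->]|[? ->]] //; lra. Qed.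

Section Main.
Variable R : realFieldType.
Variable n : nat.
Implicit Types (t : 'I_n -> 'I_n) (r : 'I_n -> R).

Definition Goal t r := 0 <= FF t r /\
  (forall m, \sum_(x : 'I_n) r x <= 2 * m%:R + 2 -> FF t r <= V m (\sum_(x : 'I_n) r x)).

Lemma base_case t r : (forall x, r x = 0) -> Goal t r.
Proof.
move=> h; rewrite /Goal FF0 // big1 //; split => // m _.
rewrite /V sub0r clip0; last by rewrite oppr_le0; apply: mulr_ge0 => //; apply: ler0n.
rewrite mul0r expr2 mulr0 addr0 mulr1; apply: exprn_ege1; lra.
Qed.

Lemma step_helper t r r0 (f : R) :
  FF t r = FF t r0 * f -> 0 <= f <= 1 ->
  \sum_(x : 'I_n) r0 x <= \sum_(x : 'I_n) r x -> Goal t r0 -> Goal t r.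
Proof.
move=> e /andP[f0 f1] hs [h0 h1]; rewrite /Goal e; split.
  exact: mulr_ge0.
move=> m hm; have := h1 m ltac:(lra) => h2.
have h3 := V_mono m hs.
have : FF t r0 * f <= FF t r0 by rewrite -{2}(mulr1 (FF t r0)); apply: ler_wpM2l.
lra.
Qed.

Lemma sum_rz (C : {set 'I_n}) r :
  \sum_(x : 'I_n) r x = \sum_(x : 'I_n) rz C r x + \sum_(x in C) r x.
Proof.
rewrite (bigID (mem C)) [X in _ = X + _](bigID (mem C)) /=.
rewrite [X in _ = X + _ + _]big1; last by move=> x hx; rewrite /rz hx.
rewrite add0r addrC; congr (_ + _); apply: eq_bigr => x hx; by rewrite /rz (negbTE hx).
Qed.

Lemma rz_range (C : {set 'I_n}) r : (forall x, 0 <= r x <= 1) -> forall x, 0 <= rz C r x <= 1.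
Proof. by move=> h x; rewrite /rz; case: ifP => // _; rewrite lexx ler01. Qed.

Lemma rz_card (C : {set 'I_n}) r i k : i \in C -> r i != 0 ->
  (#|[set x | r x != 0%R]| <= k.+1)%N -> (#|[set x | rz C r x != 0%R]| <= k)%N.
Proof.
move=> hi ri hk.
have sub : [set x | rz C r x != 0] \subset [set x | r x != 0] :\ i.
  apply/subsetP => x; rewrite !inE /rz; case: ifP => [_|hx ->]; first by rewrite eqxx.
  by rewrite andbT; apply: contraFneq hx => ->.
have := subset_leq_card sub.
rewrite (cardsD1 i [set x | r x != 0]) inE ri /= add1n in hk.
move=> h; apply: (leq_trans h); by rewrite -ltnS.
Qed.

Lemma Fbound k : forall t r, (forall x, 0 <= r x <= 1) ->
  (#|[set x | r x != 0%R]| <= k)%N -> Goal t r.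
Proof.
elim: k => [|k IH] t r hr hk.
  apply: base_case => x; apply/eqP; apply: contraT => hx.
  have hA : [set x | r x != 0%R] = set0 by apply/eqP; rewrite -cards_eq0 -leqn0.
  by have := in_set0 x; rewrite -hA inE hx.
have sum_le : forall C : {set 'I_n}, \sum_(x : 'I_n) rz C r x <= \sum_(x : 'I_n) r x.
  move=> C; rewrite (sum_rz C) lerDl; apply: sumr_ge0 => x _; by case/andP: (hr x).
case/boolP: [exists x, (r x != 0) && (t x == x)] => [/existsP[i /andP[ri /eqP ti]]|nA].
  apply: (step_helper (r0 := rz [set i] r) (f := 1 - r i)).
  - by rewrite (caseA r ti) mulrC.
  - by have /andP[? ?] := hr i; apply/andP; split; lra.
  - exact: sum_le.
  - apply: IH; [exact: rz_range | apply: (rz_card _ ri hk); by rewrite inE].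
case/boolP: [exists x, (r x != 0) && [forall y, (t y == x) ==> (r y == 0)]] =>
   [/existsP[i /andP[ri /forallP hy]]|nB].
  have ti : t i != i.
    by apply: contraNneq nA => e; apply/existsP; exists i; rewrite ri e eqxx.
  apply: (step_helper (r0 := rz [set i] r) (f := 1)).
  - rewrite mulr1; apply: caseB => // y ty; apply/eqP; have := hy y; rewrite ty eqxx; exact.
  - by rewrite ler01 lexx.
  - exact: sum_le.
  - apply: IH; [exact: rz_range | apply: (rz_card _ ri hk); by rewrite inE].
set A := [set x | r x != 0%R].
case/boolP: (A == set0) => [/eqP A0|An0].
  apply: base_case => x; apply/eqP; apply: contraT => hx.
  by have := in_set0 x; rewrite -A0 inE hx.
case/set0Pn: An0 => i iA.
have hnfix : forall x, x \in A -> t x != x.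
  move=> x; rewrite inE => hx; apply: contraNneq nA => e; apply/existsP; exists x.
  by rewrite hx e eqxx.
have hpred : forall x, x \in A -> exists2 y, y \in A & t y = x.
  move=> x; rewrite inE => hx.
  move/existsPn: nB => /(_ x); rewrite hx /= => /forallPn [y].
  rewrite negb_imply => /andP[/eqP ty ry].
  by exists y; rewrite ?inE.
have sub : A \subset t @: A by apply/subsetP => x /hpred [y hy <-]; apply: imset_f.
have eqA : A = t @: A by apply/eqP; rewrite eqEcard sub leq_imset_card.
have injA : {in A &, injective t} by apply/imset_injP; rewrite -eqA.
have tA : forall x, x \in A -> t x \in A by move=> x hx; rewrite eqA imset_f.
have finj : injective (fun x => if x \in A then t x else x).
  move=> x y /=; case: ifP => hx; case: ifP => hy.
  - by apply: injA.
  - by move=> e; rewrite -e tA in hy.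
  - by move=> e; rewrite e tA in hx.
  - by [].
set p := perm finj.
have pE : forall x, x \in A -> p x = t x by move=> x hx; rewrite permE hx.
have pA : forall k0, iter k0 p i \in A by elim=> //= k0 h; rewrite pE // tA.
have hC : forall y, fconnect p i y -> t y = p y /\ p y != y.
  move=> y /iter_findex <-.
  have zA := pA (findex p i y).
  by rewrite pE //; split => //; apply: hnfix.
have ecyc := cycle_FF r hC.
set C := [set y | fconnect p i y] in ecyc.
have iC : i \in C by rewrite inE connect0.
have r0r := rz_range C hr.
have ri : r i != 0 by rewrite inE in iA.
have [IH0 IH1] := IH t (rz C r) r0r (rz_card iC ri hk).
set P := \prod_(x in C) r x in ecyc.
set T := \sum_(x in C) r x.
have hs := sum_rz C r; rewrite -/T in hs.
have P0 : 0 <= P by apply: prodr_ge0 => x _; case/andP: (hr x).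
have P1 : P <= 1 by apply: prodr_ile1 => x _; exact: hr x.
set j := p i.
have [_ ji] := hC i (connect0 _ _).
have jC : j \in C by rewrite inE fconnect1.
have jC' : j \in C :\ i by rewrite in_setD1 ji jC.
have ePr : P = r i * (r j * \prod_(x in (C :\ i) :\ j) r x).
  by rewrite /P (big_setD1 i iC) (big_setD1 j jC').
have eTr : T = r i + (r j + \sum_(x in (C :\ i) :\ j) r x).
  by rewrite /T (big_setD1 i iC) (big_setD1 j jC').
have Q0 : 0 <= \prod_(x in (C :\ i) :\ j) r x by apply: prodr_ge0 => x _; case/andP: (hr x).
have Q1 : \prod_(x in (C :\ i) :\ j) r x <= 1 by apply: prodr_ile1 => x _; exact: hr x.
have S0 : 0 <= \sum_(x in (C :\ i) :\ j) r x by apply: sumr_ge0 => x _; case/andP: (hr x).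
have /andP[ri0 ri1] := hr i.
have /andP[rj0 rj1] := hr j.
have T0 : 0 <= T by rewrite eTr; lra.
have PT : P <= (T/2)^+2.
  have h1 : P <= r i * r j.
    rewrite ePr mulrA; rewrite -{2}(mulr1 (r i * r j)); apply: ler_wpM2l => //.
    exact: mulr_ge0.
  have h2 := sqr_ge0 (r i - r j).
  have h3 : r i + r j <= T by rewrite eTr; lra.
  have h4 : 0 <= (T - (r i + r j)) * (T + (r i + r j)) by apply: mulr_ge0; lra.
  rewrite !expr2 in h2 *; nra.
have S0' : 0 <= \sum_(x : 'I_n) rz C r x.
  by apply: sumr_ge0 => x _; case/andP: (r0r x).
rewrite -signr_odd in ecyc; case: (odd #|C|) ecyc => ecyc.
  apply: (step_helper ecyc).
  - by rewrite expr1 mulN1r; apply/andP; split; lra.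
  - exact: sum_le.
  - by split.
rewrite /Goal ecyc expr0 mul1r; split.
  by apply: mulr_ge0 => //; lra.
move=> m; rewrite hs => hm.
by apply: combine.
Qed.

End Main.

Section Vertex.
Variable R : realFieldType.
Variable n : nat.
Variable A : 'M[R]_n.
Hypothesis A0 : forall i j, 0 <= A i j.
Hypothesis A1 : forall i, \sum_(j < n) A i j <= 1.

Definition rs i := \sum_(j < n) A i j.
Definition w i j : R := if rs i == 0 then (i == j)%:R else A i j / rs i.

Lemma rs_ge0 i : 0 <= rs i.
Proof. by apply: sumr_ge0 => j _. Qed.

Lemma w_ge0 i j : 0 <= w i j.
Proof. rewrite /w; case: ifP => _; first by rewrite ler0n. by apply: divr_ge0 => //; apply: rs_ge0. Qed.

Lemma w_sum i : \sum_(j < n) w i j = 1.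
Proof.
case: (eqVneq (rs i) 0) => h.
  rewrite (eq_bigr (fun j => (i == j)%:R)); last by move=> j _; rewrite /w h eqxx.
  by rewrite (bigD1 i) //= eqxx big1 ?addr0 // => j hj; rewrite eq_sym (negbTE hj).
rewrite (eq_bigr (fun j => A i j / rs i)); last by move=> j _; rewrite /w (negbTE h).
by rewrite -mulr_suml divff.
Qed.

Lemma row_decomp i k : (1%:M - A) i k =
  \sum_(j < n) w i j * ((i == k)%:R - rs i * (k == j)%:R).
Proof.
under eq_bigr => j _ do rewrite mulrBr.
rewrite sumrB -mulr_suml w_sum mul1r !mxE.
congr (_ - _).
rewrite (bigD1 k) //= big1 ?addr0; last first.
  by move=> j hj; rewrite eq_sym (negbTE hj) mulr0 mulr0.
rewrite eqxx mulr1 /w; case: ifP => h.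
  have := psumr_eq0P (fun j _ => A0 i j) (eqP h) (isT : predT k).
  by move=> ->; rewrite (eqP h) mulr0.
by rewrite divfK // h.
Qed.

Lemma per_decomp : per (1%:M - A) =
  \sum_(f : {ffun 'I_n -> 'I_n}) (\prod_i w i (f i)) * FF (fun x => f x) rs.
Proof.
rewrite /per.
under eq_bigr => s _ do under eq_bigr => i _ do rewrite row_decomp.
under eq_bigr => s _ do rewrite bigA_distr_bigA /=.
rewrite exchange_big /=; apply: eq_bigr => f _.
rewrite /FF big_distrr /=; apply: eq_bigr => s _.
rewrite -big_split /=; apply: eq_bigr => i _.
by rewrite /fac.
Qed.

Lemma per_bound m : \sum_i rs i <= 2 * m%:R + 2 -> per (1%:M - A) <= V m (\sum_i rs i).
Proof.
move=> hm; rewrite per_decomp.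
have -> : V m (\sum_i rs i) =
   \sum_(f : {ffun 'I_n -> 'I_n}) (\prod_i w i (f i)) * V m (\sum_i rs i).
  rewrite -big_distrl /= -bigA_distr_bigA /=.
  by rewrite [X in _ = X * _]big1 ?mul1r // => i _; apply: w_sum.
apply: ler_sum => f _; apply: ler_wpM2l; first by apply: prodr_ge0 => i _; apply: w_ge0.
have hr : forall x, 0 <= rs x <= 1 by move=> x; rewrite rs_ge0 A1.
have := Fbound (fun x => f x) hr (max_card _).
by case => _; apply.
Qed.

End Vertex.

Lemma oddE m : odd m = (m %% 2 == 1)%N.
Proof. by rewrite modn2; case: (odd m). Qed.
Definition qq (m : nat) := if odd m then m.-1 else m.+1.
Lemma qq_inv m : qq (qq m) = m.
Proof. rewrite /qq !oddE; case: ifP; case: ifP; lia. Qed.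
Lemma pairE a b : ((a./2 == b./2) && (a != b))%N = (b == qq a).
Proof. rewrite -!divn2 /qq oddE; case: ifP => h; apply/idP/idP; lia. Qed.
Lemma qq_neq m : qq m != m.
Proof. rewrite /qq oddE; case: ifP; lia. Qed.

Section Extremal.
Variable R : realFieldType.
Variables (n : nat) (s : R) (e : nat).
Hypothesis hn : (1 <= n)%N.
Hypothesis hs0 : 0 <= s.
Hypothesis hns : (~~ odd n /\ s <= n%:R) \/ (odd n /\ s <= (n.-1)%:R).
Hypothesis he_even : ~~ odd e.
Hypothesis he_le : e%:R <= s.
Hypothesis he_gt : s < (e.+2)%:R.

Definition cc : R := (s - e%:R) / 2%:R.
Definition fv (m : nat) : R := if (m < e)%N then 1 else if (m./2 == e./2)%N then cc else 0.

Lemma e_le_n : (e <= n)%N.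
Proof.
case: hns => [[_ h]|[_ h]]; rewrite -(ler_nat R); apply: (le_trans he_le) => //.
apply: (le_trans h); rewrite ler_nat; lia.
Qed.

Lemma cc0 : (n <= e.+1)%N -> cc = 0.
Proof.
move=> h; have hen := e_le_n.
rewrite /cc; suff -> : s = e%:R by rewrite subrr mul0r.
apply/eqP; rewrite eq_le he_le andbT.
case: hns => [[hn2 hsn]|[hn2 hsn]].
  have -> : e = n by move: he_even hn2; rewrite !oddE; lia.
  done.
have -> : e = n.-1 by move: he_even hn2; rewrite !oddE; lia.
done.
Qed.

Lemma cc_ge0 : 0 <= cc.
Proof. rewrite /cc; apply: divr_ge0; [by rewrite subr_ge0 | by rewrite ler0n]. Qed.
Lemma cc_lt1 : cc < 1.
Proof. 
rewrite /cc ltr_pdivrMr ?ltr0n // mul1r; move: he_gt; rewrite -addn2 natrD; lra.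
Qed.

Lemma fv_range m : 0 <= fv m <= 1.
Proof.
have := cc_ge0; have := cc_lt1.
rewrite /fv; case: ifP => _; first by rewrite ler01 lexx.
case: ifP => _; first by move=> *; apply/andP; split; lra.
by rewrite lexx ler01.
Qed.

Lemma fz m : (n <= m)%N || (n <= qq m)%N -> fv m = 0.
Proof.
move=> h; have hen := e_le_n; have he := he_even; rewrite /fv.
case: ifP => h1.
  exfalso; move: h h1 he; rewrite /qq !oddE; case: ifP => /= h2; lia.
case: ifP => h2 //; apply: cc0.
move: h h2 he; rewrite -!divn2 /qq !oddE; case: ifP => /= h3; lia.
Qed.


Definition pp (x : 'I_n) : 'I_n := insubd x (qq x).
Lemma ppE x : nat_of_ord (pp x) = if (qq x < n)%N then qq x else x.
Proof. by rewrite /pp val_insubd. Qed.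

Lemma pp_inv : involutive pp.
Proof.
move=> x; apply: val_inj => /=; rewrite ppE (ppE x).
case: (ltnP (qq x) n) => h; [by rewrite qq_inv ltn_ord | by rewrite ltnNge h].
Qed.

Definition pperm : {perm 'I_n} := perm (can_inj pp_inv).
Lemma ppermE x : pperm x = pp x.
Proof. by rewrite permE. Qed.

Definition rf (x : 'I_n) : R := fv x.

Lemma W_def (i j : 'I_n) : extremal_matrix n e s i j =
  if ((i : nat)./2 == (j : nat)./2)%N && (i != j :> nat) then fv i else 0.
Proof. by rewrite /extremal_matrix mxE. Qed.

Lemma W_E (i j : 'I_n) : extremal_matrix n e s i j = (j == pp i)%:R * fv i.
Proof.
rewrite W_def pairE.
case: (eqVneq (j : nat) (qq i)) => hj.
  have -> : j == pp i.
    apply/eqP; apply: val_inj => /=; rewrite ppE -hj ltn_ord; done.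
  by rewrite mul1r.
case: (eqVneq j (pp i)) => hp; last by rewrite mul0r.
move: (hj); rewrite hp ppE; case: ifP => h; first by rewrite eqxx.
move=> _; rewrite fz ?mulr0 //; apply/orP; right; by move/negbT: h; rewrite -leqNgt.
Qed.

Lemma fv_pair a b : (a./2 = b./2)%N -> fv a = fv b.
Proof.
move=> h; rewrite /fv h; have he := he_even.
have -> : (a < e)%N = (b < e)%N.
  by apply/idP/idP; move: h he; rewrite -!divn2 !oddE; lia.
done.
Qed.

Lemma W_sym (i j : 'I_n) : extremal_matrix n e s i j = extremal_matrix n e s j i.
Proof.
rewrite !W_def eq_sym [(j : nat) == i]eq_sym.
by case: ifP => // /andP[/eqP h _]; apply: fv_pair.
Qed.

Lemma W_rowsum (i : 'I_n) : \sum_j extremal_matrix n e s i j = fv i.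
Proof.
rewrite (bigD1 (pp i)) //= big1 ?addr0; first by rewrite W_E eqxx mul1r.
by move=> j hj; rewrite W_E (negbTE hj) mul0r.
Qed.


Lemma per_W : per (1%:M - extremal_matrix n e s) = FF (fun x => pperm x) rf.
Proof.
apply: eq_bigr => sg _; apply: eq_bigr => x _.
by rewrite mxE [in X in _ + X]mxE [in X in X + _]mxE W_E /fac ppermE /rf mulrC.
Qed.

Definition rk k (x : 'I_n) : R := if (x < 2 * k)%N then fv x else 0.

Lemma pp_neq (y : 'I_n) : (qq y < n)%N -> pp y != y.
Proof.
move=> h; apply/eqP => /(congr1 (@nat_of_ord n)); rewrite ppE h => e1.
by move: (qq_neq y); rewrite e1 eqxx.
Qed.

Lemma FF_rk k : FF (fun x => pperm x) (rk k) =
  \prod_(0 <= j < k) (1 + fv (2 * j) * fv (2 * j).+1).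
Proof.
elim: k => [|k IH].
  by rewrite big_geq // FF0 // => x; rewrite /rk.
rewrite big_nat_recr //= -IH.
case: (ltnP (2 * k).+1 n) => hk.
  have hi : (2 * k < n)%N by apply: ltnW.
  set i := Ordinal hi.
  have qi : qq i = (2 * k).+1 by rewrite /qq /= oddM /= .
  have qpi : qq (pp i) = 2 * k.
    by rewrite ppE qi hk /qq /= oddM /=.
  have vpi : nat_of_ord (pp i) = (2 * k).+1 by rewrite ppE qi hk.
  have iter_pp : forall m, iter m pperm i = i \/ iter m pperm i = pp i.
    elim=> [|m IHm] /=; first by left.
    by case: IHm => ->; [right; rewrite ppermE | left; rewrite ppermE pp_inv].
  have hC : forall y, fconnect pperm i y -> pperm y = pperm y /\ pperm y != y.
    move=> y /iter_findex <-; split => //; rewrite ppermE.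
    case: (iter_pp (findex pperm i y)) => ->; apply: pp_neq.
      by rewrite qi.
    by rewrite qpi; apply: ltnW.
  have := @cycle_FF R n (fun x => pperm x) (rk k.+1) pperm i hC.
  have eC : [set y | fconnect pperm i y] = [set i; pp i].
    apply/setP => y; rewrite !inE; apply/idP/idP.
      by move/iter_findex <-; case: (iter_pp (findex pperm i y)) => ->; rewrite eqxx ?orbT.
    case/orP => /eqP ->; first exact: connect0.
    by rewrite -ppermE; apply: fconnect1.
  have ipi : i != pp i by rewrite eq_sym; apply: pp_neq; rewrite qi.
  rewrite eC cards2 ipi /= expr2 mulrNN mulr1 mul1r big_setU1 /= ?big_set1; last by rewrite inE.
  move=> ->; congr (_ * (1 + _ * _)).
  - apply: FF_ext => x; rewrite /rz /rk !inE.
    case: (eqVneq x i) => [->|hxi] /=; first by rewrite ltnn.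
    case: (eqVneq x (pp i)) => [->|hxp] /=; first by rewrite vpi ltnNge leqnSn.
    have h2 : (x : nat) != 2 * k by apply: contra hxi => /eqP h; apply/eqP/val_inj.
    have h1 : (x : nat) != (2 * k).+1.
      by apply: contra hxp => /eqP h; apply/eqP/val_inj; rewrite /= vpi.
    have -> : (x < 2 * k.+1)%N = (x < 2 * k)%N by apply/idP/idP; lia.
    done.
  - by rewrite /rk /= ifT //; lia.
  - by rewrite /rk vpi ifT //; lia.
rewrite [fv (2 * k).+1]fz ?mulr0 ?addr0 ?mulr1; last by rewrite hk.
apply: FF_ext => x; rewrite /rk.
case: (ltnP x (2 * k)) => h1; first by rewrite ifT //; lia.
case: ifP => // h2; apply: fz; apply/orP; right.
move: h1 h2 (ltn_ord x); rewrite /qq oddE; case: ifP => /=; lia.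
Qed.


Lemma e2 : (2 * e./2 = e)%N.
Proof. have := he_even; rewrite -divn2 oddE; lia. Qed.

Lemma prod_val : \prod_(0 <= j < n) (1 + fv (2 * j) * fv (2 * j).+1) =
  2 ^+ e./2 * (1 + cc ^+ 2).
Proof.
have he := he_even; have hen := e_le_n; have he2 := e2.
rewrite (big_cat_nat (n := e./2)) //=; last by move: he2; lia.
rewrite (big_cat_nat (m := e./2) (n := e./2.+1) (p := n)) //; last by move: he2; lia.
rewrite big_nat1.
rewrite (eq_big_nat _ _ (F2 := fun=> 2)); last first.
  move=> j /andP[_ hj].
  have h1 : (2 * j < e)%N by move: he2; lia.
  have h2 : ((2 * j).+1 < e)%N by move: he2 he; rewrite oddE; lia.
  by rewrite /fv h1 h2 mulr1.
rewrite prodr_const_nat subn0.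
rewrite [X in _ * (_ * X)]big_nat_cond [X in _ * (_ * X)]big1; last first.
  move=> j /andP[/andP[hj1 _] _].
  have h1 : (2 * j < e)%N = false by apply/negbTE; move: he2; lia.
  have h2 : ((2 * j)./2 == e./2)%N = false.
    by apply/negbTE; rewrite -!divn2; move: he2; rewrite -divn2; lia.
  by rewrite /fv h1 h2 mul0r addr0.
rewrite mulr1 he2 /fv ltnn eqxx.
have -> : (e.+1 < e)%N = false by lia.
have -> : (e.+1./2 == e./2)%N by move: he; rewrite -!divn2 oddE; lia.
by rewrite expr2.
Qed.

Lemma sum_val : \sum_(i < n) fv i = s.
Proof.
have he := he_even; have hen := e_le_n.
rewrite -(big_mkord xpredT fv).
have ext : \sum_(0 <= m < n.+2) fv m = \sum_(0 <= m < n) fv m.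
  rewrite !big_nat_recr //= [fv n.+1]fz ?[fv n]fz ?addr0 //; by rewrite ?leqnn ?leqnSn.
rewrite -ext (big_cat_nat (n := e)) //=; last lia.
rewrite (big_cat_nat (m := e) (n := e.+2)) //=; last lia.
rewrite (eq_big_nat _ _ (F2 := fun=> 1)); last first.
  by move=> j /andP[_ hj]; rewrite /fv hj.
rewrite sumr_const_nat subn0.
rewrite [X in _ + (_ + X)]big_nat_cond [X in _ + (_ + X)]big1; last first.
  move=> j /andP[/andP[hj1 _] _].
  have h1 : (j < e)%N = false by apply/negbTE; lia.
  have h2 : (j./2 == e./2)%N = false.
    by apply/negbTE; move: he; rewrite -!divn2 oddE; lia.
  by rewrite /fv h1 h2.
rewrite big_nat_recr //= big_nat1 /fv ltnn eqxx.
have -> : (e.+1 < e)%N = false by lia.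
have -> : (e.+1./2 == e./2)%N by move: he; rewrite -!divn2 oddE; lia.
by rewrite addr0 /cc; field.
Qed.

Lemma W_ge0 i j : 0 <= extremal_matrix n e s i j.
Proof. by rewrite W_E; apply: mulr_ge0; [apply: ler0n | case/andP: (fv_range i)]. Qed.

Lemma extremal_props : omega_tilde s (extremal_matrix n e s) /\
  doubly_substochastic (extremal_matrix n e s) /\
  per (1%:M - extremal_matrix n e s) = 2%:R ^+ e./2 * (1 + ((s - e%:R) / 2%:R) ^+ 2).
Proof.
have rows : row_substochastic (extremal_matrix n e s).
  split; first exact: W_ge0.
  by move=> i; rewrite W_rowsum; case/andP: (fv_range i).
split; [split => // | split; [split => // | ]].
- rewrite /sigma; under eq_bigr => i _ do rewrite W_rowsum.
  exact: sum_val.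
- move=> j; under eq_bigr => i _ do rewrite W_sym.
  by rewrite W_rowsum; case/andP: (fv_range j).
rewrite per_W (FF_ext _ (r2 := rk n)); last first.
  by move=> x; rewrite /rk /rf ifT //; have := ltn_ord x; lia.
by rewrite FF_rk prod_val.
Qed.

End Extremal.

Unset Implicit Arguments. Set Strict Implicit. Set Printing Implicit Defensive.

Theorem mainTheorem12 (R : realFieldType) (n : nat) (s : R) (e : nat)
  (hn : (1 <= n)%N) (hs0 : 0 <= s)
  (hns : (~~ odd n /\ s <= n%:R) \/ (odd n /\ s <= (n.-1)%:R))
  (he_even : ~~ odd e) (he_le : e%:R <= s) (he_gt : s < (e.+2)%:R) :
  let val := 2%:R ^+ e./2 * (1 + ((s - e%:R) / 2%:R) ^+ 2) in
  (forall A : 'M[R]_n, omega_tilde s A -> per (1%:M - A) <= val) /\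
  let W := extremal_matrix n e s in
  omega_tilde s W /\ doubly_substochastic W /\ per (1%:M - W) = val.
Proof.
move=> val; split; last first.
  by move=> W; apply: extremal_props.
move=> A [[A0 A1] hsig].
have esum : \sum_i rs A i = s by rewrite -hsig.
have hE2 : (2 * e./2)%N = e by move: he_even; rewrite -divn2 oddE; lia.
have ee : 2 * (e./2)%:R = e%:R :> R by rewrite -[in RHS]hE2 natrM.
have hm : \sum_i rs A i <= 2 * (e./2)%:R + 2.
  rewrite esum ee; move: he_gt; rewrite -addn2 natrD; lra.
have := per_bound A0 A1 hm; rewrite esum /V ee clip_id //; last by rewrite subr_ge0.
Qed.
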